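(* Let $L\ge 2$, $k\ge 2$ be integers, $\kappa:\{1,\dots,k-1\}\times\mathbb{N}\to\{0,\dots,L-1\}$ a map, and let $(b(n))_{n=0}^\infty$ be the $(L,k,\kappa)$-TM sequence over the letters $a_j=\exp\frac{2\pi\sqrt{-1}\,j}{L}$, $0\le j\le L-1$. Let $(a(n))_{n=0}^\infty$ be the sequence with $a(0)=0$, $0\le a(n)\le L-1$ and $a(n)\equiv\sum_{y=0}^\infty\sum_{s=1}^{k-1}\kappa(s,y)\,d(n;sk^y)\pmod L$. Then for every $n\ge 0$, $$\frac{L}{2\pi\sqrt{-1}}\log b(n)\equiv a(n)\pmod L$$ (for any determination of the logarithm).
   Context: $\mathbb{N}$ is the set of non-negative integers. Given pairwise distinct complex numbers $a_0,\dots,a_{L-1}$, let $f$ be the map on $\{a_0,\dots,a_{L-1}\}$ with $f(a_i)=a_{i+1}$ (indices modulo $L$), extended letterwise to finite words; $f^j$ its $j$-fold iterate, $f^0$ the identity. Define $A_0=a_0$ and $A_{n+1}=A_n\,f^{\kappa(1,n)}(A_n)\cdots f^{\kappa(k-1,n)}(A_n)$ (concatenation); $A_n$ is a prefix of $A_{n+1}$, and the infinite word $A_\infty=\lim A_n$ indexed from $0$ is the $(L,k,\kappa)$-TM sequence. Every $n\ge1$ has a unique $k$-adic expansion $n=\sum_{q=1}^r s_{n,q}k^{w_n(q)}$ with $1\le s_{n,q}\le k-1$, $0\le w_n(1)<\dots<w_n(r)$; $d(n;sk^y)=1$ if some $q$ has $s_{n,q}=s$ and $w_n(q)=y$, and $d(n;sk^y)=0$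 otherwise. *)

(* Defs.v *)
From Stdlib Require Import Reals Lia List ZArith.
From Coquelicot Require Import Coquelicot.
Import ListNotations.

Definition cexp (z : C) : C :=
  (exp (fst z) * cos (snd z), exp (fst z) * sin (snd z))%R.

Definition letter (L j : nat) : C :=
  cexp (0%R, (2 * PI * INR j / INR L)%R).

Local Open Scope nat_scope.

(* Words are represented by the list of indices j of their letters a_j;
   f^j acts on the index i as i |-> (i + j) mod L. *)
Definition fpow (L j : nat) (w : list nat) : list nat :=
  map (fun i => (i + j) mod L) w.

Fixpoint tm_word (L k : nat) (kappa : nat -> nat -> nat) (n : nat) : list nat :=
  match n with
  | 0 => [0%nat]
  | S m => let A := tm_word L k kappa m in
           (A ++ concat (map (fun s => fpow L (kappa s m) A) (seq 1 (k - 1))))%list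
  end.

Definition kdigit (k n y : nat) : nat := (n / k ^ y) mod k.

Definition dterm (k n s y : nat) : nat :=
  if andb (1 <=? s) (kdigit k n y =? s) then 1 else 0.

(* sum_{y >= 0} sum_{s=1}^{k-1} kappa(s,y) d(n; s k^y); the terms with y > n
   vanish since k^y > n for k >= 2, so the sum is over y = 0..n. *)
Definition nat_sum (l : list nat) : nat := fold_right Nat.add 0 l.

Definition kappa_sum (k : nat) (kappa : nat -> nat -> nat) (n : nat) : nat :=
  nat_sum (map (fun y =>
    nat_sum (map (fun s => kappa s y * dterm k n s y) (seq 1 (k - 1))))
    (seq 0 (S n))).

(* Main.v *)
Require Import Defs.
From Stdlib Require Import Reals Lia List ZArith.
From Coquelicot Require Import Coquelicot.
From Stdlib Require Import Lra.
Import ListNotations.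

Lemma cexp_eq (w : C) (th : R) : cexp w = cexp (0%R, th) ->
  fst w = 0%R /\ exists t : Z, snd w = (th + 2 * PI * IZR t)%R.
Proof.
  destruct w as [x y]; unfold cexp; simpl; intro H.
  injection H; intros Hs Hc. rewrite exp_0 in Hs, Hc.
  rewrite Rmult_1_l in Hs, Hc.
  assert (Hx : exp x = 1%R).
  { assert (E : (exp x * exp x = 1)%R).
    { pose proof (sin2_cos2 y) as P1. pose proof (sin2_cos2 th) as P2.
      unfold Rsqr in *. rewrite <- Hs, <- Hc in P2. nra. }
    pose proof (exp_pos x). nra. }
  assert (x = 0%R) by (rewrite <- (ln_exp x), Hx; apply ln_1).
  subst x. split; [reflexivity|].
  rewrite exp_0, !Rmult_1_l in Hs, Hc.
  set (u := ((y - th) / 2)%R).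
  assert (H2 : cos (2 * u) = 1%R).
  { replace (2 * u)%R with (y - th)%R by (unfold u; field).
    rewrite cos_minus, Hs, Hc. pose proof (sin2_cos2 th). unfold Rsqr in *. lra. }
  rewrite cos_2a_sin in H2.
  assert (sin u = 0%R) by nra.
  destruct (sin_eq_0_0 u H0) as [t Ht]. exists t.
  unfold u in Ht. lra.
Qed.

Lemma final_eq (L j : nat) (t : Z) (y : R) : (0 < L)%nat ->
  y = (2 * PI * INR j / INR L + 2 * PI * IZR t)%R ->
  (RtoC (INR L) * (0%R, y) / (RtoC (2 * PI) * Ci))%C =
      RtoC (IZR ((Z.of_nat j + Z.of_nat L * t)%Z)).
Proof.
  intros HL Hy. subst y.
  rewrite plus_IZR, mult_IZR, <- !INR_IZR_INZ.
  assert (INR L <> 0%R) by (apply not_0_INR; lia).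
  pose proof PI_RGT_0.
  unfold Cdiv, Cmult, Cinv, Ci, RtoC; simpl.
  f_equal; field; split; try lra; auto.
Qed.
Section Comb.
Local Open Scope nat_scope.

Definition inner (k : nat) (kappa : nat -> nat -> nat) (n y : nat) : nat :=
  nat_sum (map (fun s => kappa s y * dterm k n s y) (seq 1 (k - 1))).

Definition gs k kappa m n := nat_sum (map (fun y => inner k kappa n y) (seq 0 m)).

Lemma nat_sum_app l1 l2 : nat_sum (l1 ++ l2) = nat_sum l1 + nat_sum l2.
Proof. induction l1; simpl; lia. Qed.

Lemma gs_S k kappa m n : gs k kappa (S m) n = gs k kappa m n + inner k kappa n m.
Proof. unfold gs. rewrite seq_S, map_app, nat_sum_app. simpl. lia. Qed.

Lemma sum_ind (h : nat -> bool) (f : nat -> nat) d a len :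
  nat_sum (map (fun s => f s * (if andb (h s) (d =? s) then 1 else 0)) (seq a len)) =
  if andb (andb (h d) (a <=? d)) (d <? a + len) then f d else 0.
Proof.
  revert a; induction len; intros a; cbn [seq map]; unfold nat_sum; cbn [fold_right]; fold nat_sum.
  - destruct (h d), (Nat.leb_spec a d), (Nat.ltb_spec d (a + 0)); simpl; auto; try lia.
  - rewrite IHlen.
    destruct (Nat.eqb_spec d a).
    + subst. rewrite ?Nat.leb_refl.
      destruct (Nat.leb_spec (S a) a); try lia.
      destruct (Nat.ltb_spec a (a + S len)); try lia.
      rewrite Bool.andb_true_r.
      destruct (h a); cbn [andb]; lia.
    + rewrite Bool.andb_false_r, Nat.mul_0_r, Nat.add_0_l. destruct (h d); cbn [andb]; auto.
      destruct (Nat.leb_spec a d), (Nat.leb_spec (S a) d), (Nat.ltb_spec d (S a + len)),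
        (Nat.ltb_spec d (a + S len)); simpl; auto; lia.
Qed.

Lemma inner_eq k kappa n y : 2 <= k ->
  inner k kappa n y = if kdigit k n y =? 0 then 0 else kappa (kdigit k n y) y.
Proof.
  intro Hk. unfold inner, dterm. rewrite (sum_ind (fun s => 1 <=? s)).
  pose proof (Nat.mod_upper_bound (n / k ^ y) k ltac:(lia)). unfold kdigit in *.
  destruct (Nat.eqb_spec ((n / k ^ y) mod k) 0).
  - rewrite e. reflexivity.
  - replace (1 <=? (n / k ^ y) mod k) with true by (symmetry; apply Nat.leb_le; lia).
    replace (1 + (k-1)) with k by lia.
    replace ((n / k ^ y) mod k <? k) with true by (symmetry; apply Nat.ltb_lt; lia).
    reflexivity.
Qed.

Lemma gs_ext k kappa m n r : (forall y, y < m -> kdigit k n y = kdigit k r y) ->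
  gs k kappa m n = gs k kappa m r.
Proof.
  intros H. unfold gs. f_equal. apply map_ext_in. intros y Hy.
  apply in_seq in Hy. unfold inner, dterm. rewrite H by lia. reflexivity.
Qed.

Lemma concat_len (F : nat -> list nat) l a len :
  (forall s, length (F s) = l) -> length (concat (map F (seq a len))) = len * l.
Proof.
  intros H. revert a; induction len; intros a; simpl; auto.
  rewrite length_app, H, IHlen. lia.
Qed.

Lemma concat_nth (F : nat -> list nat) l a len q r :
  (forall s, length (F s) = l) -> q < len -> r < l ->
  nth (q * l + r) (concat (map F (seq a len))) 0 = nth r (F (a + q)) 0.
Proof.
  intros H. revert a q; induction len; intros a q Hq Hr; [lia|]. simpl.
  destruct q.
  - simpl. rewrite app_nth1 by (rewrite H; lia). rewrite Nat.add_0_r. reflexivity.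
  - rewrite app_nth2 by (rewrite H; lia). rewrite H.
    replace (S q * l + r - l) with (q * l + r) by lia.
    rewrite IHlen by lia. do 2 f_equal. lia.
Qed.

Lemma tm_prop L k kappa m : 2 <= L -> 2 <= k ->
  length (tm_word L k kappa m) = k ^ m /\
  forall n, n < k ^ m -> nth n (tm_word L k kappa m) 0 = gs k kappa m n mod L.
Proof.
  intros HL Hk. induction m.
  - simpl. split; auto. intros n Hn. assert (n = 0) by lia. subst. simpl.
    unfold gs. simpl. rewrite Nat.Div0.mod_0_l. reflexivity.
  - destruct IHm as [Hlen Hnth]. simpl tm_word.
    set (A := tm_word L k kappa m) in *.
    assert (HF : forall s, length (fpow L (kappa s m) A) = k ^ m).
    { intros s. unfold fpow. rewrite length_map. auto. }
    split.
    + rewrite length_app, (concat_len (fun s => fpow L (kappa s m) A) (k^m) 1 (k-1) HF). rewrite Hlen. simpl.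
      destruct k as [|k0]; [lia|]. simpl. rewrite Nat.sub_0_r. ring.
    + intros n Hn. rewrite gs_S.
      assert (Hpos : 0 < k ^ m) by (apply Nat.neq_0_lt_0, Nat.pow_nonzero; lia).
      destruct (Nat.ltb_spec n (k ^ m)).
      * rewrite app_nth1 by lia. rewrite Hnth by lia.
        rewrite inner_eq by lia. unfold kdigit. rewrite Nat.div_small by lia.
        rewrite Nat.Div0.mod_0_l. simpl. f_equal. lia.
      * rewrite app_nth2 by lia. rewrite Hlen.
        set (q := n / k ^ m). set (r := n mod k ^ m).
        assert (Hdec : n = q * k ^ m + r) by (unfold q, r; rewrite Nat.mul_comm; apply Nat.div_mod; lia).
        assert (Hr : r < k ^ m) by (apply Nat.mod_upper_bound; lia).
        assert (Hq1 : 1 <= q) by nia.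
        assert (Hqk : q < k) by (simpl in Hn; nia).
        replace (n - k ^ m) with ((q - 1) * k ^ m + r) by nia.
        rewrite (concat_nth _ (k ^ m)) by (auto; lia).
        unfold fpow.
        rewrite nth_indep with (d' := (fun i => (i + kappa (1 + (q - 1)) m) mod L) 0)
          by (rewrite length_map; lia).
        rewrite (map_nth (fun i => (i + kappa (1 + (q - 1)) m) mod L) A 0 r). rewrite Hnth by lia.
        replace (1 + (q - 1)) with q by lia.
        rewrite Nat.Div0.add_mod_idemp_l.
        rewrite (gs_ext k kappa m n r).
        -- rewrite inner_eq by lia. unfold kdigit. fold q.
           rewrite (Nat.mod_small q k) by lia.
           replace (q =? 0) with false by (symmetry; apply Nat.eqb_neq; lia).
           reflexivity.
        -- intros y Hy. unfold kdigit.
           assert (Ekm : k ^ m = k ^ (m - y - 1) * k * k ^ y).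
           { replace m with (m - y - 1 + 1 + y) at 1 by lia. rewrite !Nat.pow_add_r, Nat.pow_1_r. reflexivity. }
           rewrite Hdec, Ekm.
           replace (q * (k ^ (m - y - 1) * k * k ^ y) + r) with
             (r + (q * k ^ (m - y - 1) * k) * k ^ y) by lia.
           rewrite Nat.div_add by (apply Nat.pow_nonzero; lia).
           rewrite Nat.Div0.mod_add. reflexivity.
Qed.
End Comb.

Theorem proposition2p1 (L k : nat) (kappa : nat -> nat -> nat)
  (HL : (2 <= L)%nat) (Hk : (2 <= k)%nat)
  (Hkappa : forall s y, (1 <= s <= k - 1)%nat -> (kappa s y < L)%nat)
  (b : nat -> C)
  (Hb : forall m n, (n < length (tm_word L k kappa m))%nat ->
          b n = letter L (nth n (tm_word L k kappa m) 0%nat))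
  (a : nat -> nat)
  (Ha0 : a 0%nat = 0%nat)
  (HaL : forall n, (a n <= L - 1)%nat)
  (Hamod : forall n, (a n mod L = kappa_sum k kappa n mod L)%nat) :
  forall (n : nat) (w : C), cexp w = b n ->
    exists m : Z,
      (RtoC (INR L) * w / (RtoC (2 * PI) * Ci))%C =
      RtoC (IZR ((Z.of_nat (a n) + Z.of_nat L * m)%Z)).
Proof.
  intros n w Hw.
  destruct (tm_prop L k kappa (S n) HL Hk) as [Hlen Hnth].
  assert (Hn : (n < k ^ S n)%nat) by (pose proof (Nat.pow_gt_lin_r k n ltac:(lia)); simpl; nia).
  rewrite (Hb (S n) n) in Hw by lia. rewrite Hnth in Hw by lia.
  assert (Hj : (gs k kappa (S n) n mod L = a n)%nat).
  { change (kappa_sum k kappa n mod L = a n)%nat. rewrite <- Hamod.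
    apply Nat.mod_small. specialize (HaL n). lia. }
  rewrite Hj in Hw. unfold letter in Hw.
  destruct (cexp_eq w _ Hw) as [H0 [t Ht]]. exists t.
  destruct w as [x y]; simpl in *; subst x. apply final_eq; [lia | exact Ht].
Qed.
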